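(* Let $G$ be a reducible multigraph. Then the number of degree-$0$ vertices remaining after $G$ has been fully reduced by channel-preserving moves equals $\dim_{\mathbf{Z}/2\mathbf{Z}}\mathcal{C}(G)$; in particular this number does not depend on the sequence of channel-preserving moves used.
   Context: Multigraphs (finite, no self-loops) are allowed; $N(v)$ is the multiset of neighbours of $v$ with multiplicity equal to the number of joining edges. A channel is a vertex set $C$ such that every vertex $v$ has an even number of elements of $N(v)$ (counted with multiplicity) in $C$; $\mathcal{C}(G)$ is the $\mathbf{Z}/2\mathbf{Z}$-vector space of channels under symmetric difference. Channel-preserving moves: (VC) for a vertex $v$ of degree 2 adjacent to distinct $v_1,v_2$, contract both edges at $v$ and delete resulting self-loops; (ED) delete two edges with the same endpoints; (FV) for distinct adjacent $v_1,v_2$ with $\deg v_1=1$, delete $v_1,v_2$ and their incident edges. $G$ is reducible if it can be transformed by a finite sequence of channel-preserving moves into a graph all of whose vertices have degree $0$. *)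

(* Defs.v *)
From HB Require Import structures.
From Stdlib Require Import Relation_Operators.
From mathcomp Require Import all_boot all_order all_algebra.
Set Implicit Arguments. Unset Strict Implicit. Unset Printing Implicit Defensive.
Import GRing.Theory.

Record mgraph := MGraph { nv : nat; mult : 'I_nv -> 'I_nv -> nat }.
Arguments mult : clear implicits.

Definition wf (G : mgraph) : Prop :=
  (forall x y, mult G x y = mult G y x) /\ (forall x, mult G x x = 0).

Definition deg (G : mgraph) (x : 'I_(nv G)) : nat := \sum_(y : 'I_(nv G)) mult G x y.

(* (ED): delete two edges with the same endpoints u <> w. The vertex sets are
   identified by a bijection f. *)
Definition ED_move (G H : mgraph) : Prop :=
  exists (f : 'I_(nv H) -> 'I_(nv G)) (u w : 'I_(nv G)),
    [/\ bijective f, u != w, 2 <= mult G u w &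
      forall i j, mult H i j =
        if ((f i == u) && (f j == w)) || ((f i == w) && (f j == u))
        then mult G (f i) (f j) - 2 else mult G (f i) (f j)].

(* (FV): v1 <> v2 adjacent, deg v1 = 1; delete v1, v2 and incident edges.
   f embeds the remaining vertices of H onto V(G) \ {v1, v2}. *)
Definition FV_move (G H : mgraph) : Prop :=
  exists (v1 v2 : 'I_(nv G)) (f : 'I_(nv H) -> 'I_(nv G)),
    [/\ v1 != v2, 0 < mult G v1 v2 & deg v1 = 1] /\
    [/\ injective f,
      (forall x, x != v1 -> x != v2 -> exists i, f i = x),
      (forall i, f i != v1 /\ f i != v2) &
      forall i j, mult H i j = mult G (f i) (f j)].

(* (VC): v of degree 2 adjacent to distinct v1, v2; contract both edges at v
   (so v, v1, v2 become a single vertex, represented in H by the preimage of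
   v1) and delete the resulting self-loops. *)
Definition VC_class (G : mgraph) (v v1 v2 x : 'I_(nv G)) : {set 'I_(nv G)} :=
  if x == v1 then [set v; v1; v2] else [set x].

Definition VC_move (G H : mgraph) : Prop :=
  exists (v v1 v2 : 'I_(nv G)) (f : 'I_(nv H) -> 'I_(nv G)),
    [/\ v1 != v2, v != v1 & v != v2] /\
    [/\ deg v = 2, 0 < mult G v v1 & 0 < mult G v v2] /\
    [/\ injective f,
      (forall x, x != v -> x != v2 -> exists i, f i = x),
      (forall i, f i != v /\ f i != v2) &
      forall i j, mult H i j =
        if i == j then 0 else
        \sum_(a in VC_class v v1 v2 (f i)) \sum_(b in VC_class v v1 v2 (f j))
           mult G a b].

Definition move (G H : mgraph) : Prop := VC_move G H \/ ED_move G H \/ FV_move G H.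

Definition moves : mgraph -> mgraph -> Prop := clos_refl_trans mgraph move.

Definition all_deg0 (G : mgraph) : Prop := forall x : 'I_(nv G), deg x = 0.

Definition reducible (G : mgraph) : Prop := exists H, moves G H /\ all_deg0 H.

Definition is_channel (G : mgraph) (C : {set 'I_(nv G)}) : bool :=
  [forall v : 'I_(nv G), ~~ odd (\sum_(u in C) mult G v u)].

(* A vertex set is identified with its indicator vector in F_2^V; symmetric
   difference corresponds to vector addition. *)
Definition setvec (n : nat) (C : {set 'I_n}) : 'rV['F_2]_n :=
  (\row_i (i \in C)%:R)%R.

Definition channel_space (G : mgraph) : {vspace 'rV['F_2]_(nv G)} :=
  <<[seq setvec C | C in [set C : {set 'I_(nv G)} | is_channel C]]>>%VS.

(* Main.v *)
Require Import Defs.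
From HB Require Import structures.
From Stdlib Require Import Relation_Operators.
From mathcomp Require Import all_boot all_order all_algebra.
From mathcomp Require Import finfield zify ring.
Set Implicit Arguments. Unset Strict Implicit. Unset Printing Implicit Defensive.
Import GRing.Theory.
Local Open Scope ring_scope.


Lemma F2_nat (n : nat) : (n%:R : 'F_2) = (odd n)%:R.
Proof.
elim: n => [//|n IH]; rewrite -[n.+1]addn1 natrD IH oddD /=.
by case: (odd n); apply/val_inj.
Qed.

Lemma F2_add_eq0 (a b : 'F_2) : (a + b == 0) = (a == b).
Proof. by rewrite addr_eq0; move: a b => [[|[|//]] ?] [[|[|//]] ?]. Qed.

Definition Gv (G : mgraph) (c : 'rV['F_2]_(nv G)) (x : 'I_(nv G)) : 'F_2 :=
  \sum_y c 0 y * (mult G x y)%:R.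

Definition chan (G : mgraph) (c : 'rV['F_2]_(nv G)) : bool :=
  [forall x, Gv c x == 0].

Lemma Gv_setvec (G : mgraph) (C : {set 'I_(nv G)}) x :
  Gv (setvec C) x = (odd (\sum_(u in C) mult G x u))%:R.
Proof.
rewrite /Gv /setvec -F2_nat natr_sum (big_mkcond (fun u => u \in C)) /=.
by apply: eq_bigr => i _; rewrite mxE; case: (i \in C); rewrite ?mul1r ?mul0r.
Qed.

Lemma chan_setvec (G : mgraph) (C : {set 'I_(nv G)}) :
  chan (setvec C) = is_channel C.
Proof.
apply/forallP/forallP => H x; move: (H x); rewrite Gv_setvec;
  by case: (odd _).
Qed.

Lemma chanD G (c d : 'rV['F_2]_(nv G)) : chan c -> chan d -> chan (c + d).
Proof.
move=> /forallP Hc /forallP Hd; apply/forallP => x; rewrite /Gv.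
under eq_bigr do rewrite mxE mulrDl.
by rewrite big_split /= -!/(Gv _ x) (eqP (Hc x)) (eqP (Hd x)) addr0.
Qed.

Lemma chanZ G (a : 'F_2) (c : 'rV['F_2]_(nv G)) : chan c -> chan (a *: c).
Proof.
move=> /forallP Hc; apply/forallP => x; rewrite /Gv.
under eq_bigr do rewrite mxE -mulrA.
by rewrite -mulr_sumr -/(Gv _ x) (eqP (Hc x)) mulr0.
Qed.

Lemma chan0 G : chan (0 : 'rV['F_2]_(nv G)).
Proof. apply/forallP => x; rewrite /Gv big1 // => y _; by rewrite mxE mul0r. Qed.

Lemma F2_b (a : 'F_2) : a = (a != 0)%:R.
Proof. by move: a => [[|[|//]] ?]; apply/val_inj. Qed.

Lemma mem_channel_space G (c : 'rV['F_2]_(nv G)) :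
  (c \in channel_space G) = chan c.
Proof.
apply/idP/idP => [Hc | Hc].
  move: Hc; rewrite /channel_space.
  set s := [seq _ | _ in _] => Hc.
  have := @coord_span _ _ _ (in_tuple s) c Hc => ->.
  apply: (big_ind (fun v => chan v)) => //; [exact: chan0|exact: chanD|].
  move=> i _; apply: chanZ.
  have : s`_i \in s by apply: mem_nth; exact: ltn_ord.
  by case/mapP => C; rewrite mem_enum inE -chan_setvec => ? ->.
apply: memv_span; apply/mapP; exists [set i | c 0 i != 0].
  by rewrite mem_enum inE -chan_setvec; apply: etrans Hc; congr chan;
   apply/rowP => i; rewrite !mxE inE -F2_b.
by apply/rowP => i; rewrite !mxE inE -F2_b.
Qed.

Lemma card_chan G : (2 ^ \dim (channel_space G))%N = #|[pred c | chan (G:=G) c]|.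
Proof.
have := card_vspace (channel_space G); rewrite card_Fp // => <-.
apply: eq_card => c.
by rewrite !inE mem_channel_space.
Qed.


Lemma card_maps (T1 T2 : finType) (A : pred T1) (B : pred T2)
  (phi : T1 -> T2) (psi : T2 -> T1) :
  (forall x, A x -> B (phi x)) -> (forall y, B y -> A (psi y)) ->
  (forall y, B y -> phi (psi y) = y) -> {in A &, injective phi} ->
  #|A| = #|B|.
Proof.
move=> HA HB Hpp Hinj; rewrite -(card_in_imset Hinj); apply: eq_card => y.
apply/imsetP/idP => [[x Ax ->]|By]; first exact: HA.
by exists (psi y); [exact: HB | rewrite Hpp].
Qed.

Lemma split_sum (V : nmodType) n m (f : 'I_m -> 'I_n) (a b : 'I_n) (F : 'I_n -> V) :
  injective f -> (forall x, x != a -> x != b -> exists i, f i = x) ->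
  (forall i, f i != a /\ f i != b) -> a != b ->
  \sum_x F x = \sum_j F (f j) + F a + F b.
Proof.
move=> finj fsur fim ab.
rewrite (bigD1 a) //= (bigD1 b) ?(eq_sym b a) //=.
rewrite -[RHS]addrA [RHS]addrC addrA; congr (_ + _).
have -> : \sum_j F (f j) = \sum_(x in [set f j | j in predT]) F x.
  by rewrite big_imset //=; move=> i j _ _; apply: finj.
apply: eq_bigl => x; apply/idP/imsetP.
  by case/andP => xa xb; have [i <-] := fsur x xa xb; exists i.
by case=> i _ ->; have [-> ->] := fim i.
Qed.

Lemma cases3 n m (f : 'I_m -> 'I_n) (a b : 'I_n) x :
  (forall x, x != a -> x != b -> exists i, f i = x) ->
  [\/ x = a, x = b | exists i, x = f i].
Proof.
move=> fsur; case: (eqVneq x a) => [->|xa]; first by constructor 1.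
case: (eqVneq x b) => [->|xb]; first by constructor 2.
by have [i <-] := fsur x xa xb; constructor 3; exists i.
Qed.

Definition N (G : mgraph) := #|[pred c | chan (G:=G) c]|.

Lemma F2_2 : (2%:R : 'F_2) = 0.
Proof. by apply/val_inj. Qed.


Lemma FV_inv G H : wf G -> FV_move G H -> wf H /\ N G = N H.
Proof.
move=> [sym0 diag0] [v1 [v2 [f [[v12 m12 dv1] [finj fsur fim mH]]]]].
split; first by split => [i j|i]; rewrite !mH ?diag0 // sym0.
have [m1 m0] : mult G v1 v2 = 1%N /\ forall y, y != v2 -> mult G v1 y = 0%N.
  move: dv1; rewrite /deg (bigD1 v2) //=; set s := (\sum_(y | _) _)%N => E.
  have h : s = 0%N by move: m12 E; lia.
  split; first by move: m12 E; lia.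
  move=> y yv2; move/eqP: h; rewrite sum_nat_eq0 => /forallP /(_ y).
  by rewrite yv2 /= => /eqP.
have SS := fun F => split_sum F finj fsur fim v12.
pose phi (c : 'rV['F_2]_(nv G)) : 'rV['F_2]_(nv H) := \row_i c 0 (f i).
have A : forall (c : 'rV['F_2]_(nv G)) i, c 0 v2 = 0 -> Gv (phi c) i = Gv c (f i).
  move=> c i c2; rewrite /Gv SS sym0 (m0 _ (fim i).2) c2 mul0r mulr0 !addr0.
  by apply: eq_bigr => j _; rewrite mxE mH.
have B : forall c : 'rV['F_2]_(nv G), Gv c v1 = c 0 v2.
  move=> c; rewrite /Gv SS diag0 m1 mulr0 addr0 mulr1 big1 ?add0r // => j _.
  by rewrite m0 ?mulr0 //; case: (fim j).
have C : forall c : 'rV['F_2]_(nv G), Gv c v2 = \sum_j c 0 (f j) * (mult G v2 (f j))%:R + c 0 v1.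
  by move=> c; rewrite /Gv SS diag0 [mult G v2 v1]sym0 m1 mulr1 mulr0 addr0.
pose t (d : 'rV['F_2]_(nv H)) := - \sum_j d 0 j * (mult G v2 (f j))%:R.
pose psi (d : 'rV['F_2]_(nv H)) : 'rV['F_2]_(nv G) :=
  \row_x (if [pick i | f i == x] is Some i then d 0 i else if x == v1 then t d else 0).
have psif : forall (d : 'rV['F_2]_(nv H)) i, psi d 0 (f i) = d 0 i.
  move=> d i; rewrite mxE; case: pickP => [i' /eqP /finj -> //|/(_ i)].
  by rewrite eqxx.
have psiv : forall (d : 'rV['F_2]_(nv H)) x, x = v1 \/ x = v2 -> psi d 0 x = if x == v1 then t d else 0.
  move=> d x hx; rewrite mxE; case: pickP => [i /eqP fi|//].
  by case: (fim i); rewrite fi; case: hx => ->; rewrite eqxx.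
have psi1 : forall d : 'rV['F_2]_(nv H), psi d 0 v1 = t d by move=> d; rewrite psiv ?eqxx; auto.
have psi2 : forall d : 'rV['F_2]_(nv H), psi d 0 v2 = 0 by move=> d; rewrite psiv 1?eq_sym ?(negbTE v12); auto.
have pp : forall d : 'rV['F_2]_(nv H), phi (psi d) = d by move=> d; apply/rowP => i; rewrite mxE psif.
apply: (@card_maps _ _ _ _ phi psi).
- move=> c /forallP Hc; apply/forallP => i; rewrite A //.
  by have := Hc v1; rewrite B => /eqP.
- move=> d /forallP Hd; apply/forallP => x.
  case: (cases3 x fsur) => [->|->|[i ->]].
  + by rewrite B psi2.
  + rewrite C psi1 /t; under eq_bigr do rewrite psif.
    by rewrite subrr.
  + by rewrite -A ?psi2 // pp Hd.
- by move=> d _; exact: pp.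
- move=> c c' /forallP Hc /forallP Hc' E.
  have Ef : forall i, c 0 (f i) = c' 0 (f i).
    by move=> i; move/rowP: E => /(_ i); rewrite !mxE.
  have c2 : c 0 v2 = 0 by have := Hc v1; rewrite B => /eqP.
  have c2' : c' 0 v2 = 0 by have := Hc' v1; rewrite B => /eqP.
  apply/rowP => x; case: (cases3 x fsur) => [->|->|[i ->]].
  + have := Hc v2; have := Hc' v2; rewrite !C.
    under eq_bigr do rewrite -Ef.
    by rewrite ![_ + c' 0 v1]addrC ![_ + c 0 v1]addrC !addr_eq0 => /eqP -> /eqP ->.
  + by rewrite c2 c2'.
  + exact: Ef.
Qed.


Lemma ED_inv G H : wf G -> ED_move G H -> wf H /\ N G = N H.
Proof.
move=> [sym0 diag0] [f [u [w [fbij uw m2 mH]]]].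
have [g fg gf] := fbij.
split.
  split => [i j|i]; rewrite !mH.
    by rewrite [mult G (f j) _]sym0 orbC [(f j == u) && _]andbC [(f j == w) && _]andbC.
  rewrite diag0; case: ifP => //.
have mHF : forall i j, ((mult H i j)%:R : 'F_2) = (mult G (f i) (f j))%:R.
  move=> i j; rewrite mH; case: ifP => // /orP [] /andP [/eqP -> /eqP ->].
    by rewrite (natrB _ m2) F2_2 subr0.
  by rewrite [mult G w u]sym0 (natrB _ m2) F2_2 subr0.
pose phi (c : 'rV['F_2]_(nv G)) : 'rV['F_2]_(nv H) := \row_i c 0 (f i).
pose psi (d : 'rV['F_2]_(nv H)) : 'rV['F_2]_(nv G) := \row_x d 0 (g x).
have A : forall (c : 'rV['F_2]_(nv G)) i, Gv (phi c) i = Gv c (f i).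
  move=> c i; rewrite /Gv [RHS](reindex f) /=; last exact: onW_bij.
  by apply: eq_bigr => j _; rewrite mxE mHF.
have pp : forall d : 'rV['F_2]_(nv H), phi (psi d) = d.
  by move=> d; apply/rowP => i; rewrite mxE /psi mxE fg.
apply: (@card_maps _ _ _ _ phi psi).
- by move=> c /forallP Hc; apply/forallP => i; rewrite A Hc.
- move=> d /forallP Hd; apply/forallP => x.
  by rewrite -[x]gf -A pp Hd.
- by move=> d _; exact: pp.
- move=> c c' _ _ E; apply/rowP => x; rewrite -[x]gf.
  by move/rowP: E => /(_ (g x)); rewrite !mxE.
Qed.


Lemma F2_xx (e : 'F_2) : e + e = 0. Proof. by move: e => [[|[|//]] ?]; apply/val_inj. Qed.
Lemma F2_ring (x y e : 'F_2) : x = y + (e + e) -> x = y.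
Proof. by rewrite F2_xx addr0. Qed.

Lemma VC_inv G H : wf G -> VC_move G H -> wf H /\ N G = N H.
Proof.
move=> [sym0 diag0] [v [v1 [v2 [f [[v12 vv1 vv2] [[dv m1 m2] [finj fsur fim mH]]]]]]].
have [k fk] : exists k, f k = v1 by apply: fsur; rewrite // eq_sym.
have fneq : forall j, j != k -> f j != v1.
  by move=> j; apply: contra => /eqP h; apply/eqP/finj; rewrite h fk.
have [mv1 mv2 mv0] : [/\ mult G v v1 = 1%N, mult G v v2 = 1%N &
    forall y, y != v1 -> y != v2 -> mult G v y = 0%N].
  move: dv; rewrite /deg (bigD1 v1) //= (@bigD1 _ _ _ _ v2) /=; last by rewrite eq_sym.
  set s := (\sum_(y | _) _)%N => E.
  have h : s = 0%N by move: m1 m2 E; lia.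
  split; [by move: m1 m2 E; lia | by move: m1 m2 E; lia |].
  move=> y y1 y2; move/eqP: h; rewrite sum_nat_eq0 => /forallP /(_ y).
  by rewrite y1 y2 /= => /eqP.
have sum3 : forall F : 'I_(nv G) -> nat,
    (\sum_(a in [set v; v1; v2]) F a = F v + F v1 + F v2)%N.
  move=> F; rewrite setUC big_setU1 /=; last by rewrite !inE negb_or eq_sym vv2 eq_sym v12.
  rewrite big_setU1 /=; last by rewrite inE.
  rewrite big_set1; lia.
split.
  split => [i j|i]; rewrite !mH ?eqxx //.
  rewrite eq_sym; case: eqP => // _; rewrite exchange_big.
  by apply: eq_bigr => a _; apply: eq_bigr => b _; exact: sym0.
have mHk : forall i, i != k ->
    mult H i k = (mult G (f i) v + mult G (f i) v1 + mult G (f i) v2)%N.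
  move=> i ik; rewrite mH (negbTE ik) /VC_class (negbTE (fneq i ik)) fk eqxx big_set1.
  by rewrite sum3.
have mkH : forall j, j != k ->
    mult H k j = (mult G v (f j) + mult G v1 (f j) + mult G v2 (f j))%N.
  move=> j jk; rewrite mH eq_sym (negbTE jk) /VC_class fk eqxx (negbTE (fneq j jk)).
  under eq_bigr do rewrite big_set1.
  by rewrite sum3.
have mHij : forall i j, i != k -> j != k -> mult H i j = mult G (f i) (f j).
  move=> i j ik jk; rewrite mH /VC_class (negbTE (fneq i ik)) (negbTE (fneq j jk)).
  rewrite big_set1 big_set1.
  by case: eqP => [->|]; rewrite ?diag0.
have mHkk : mult H k k = 0%N by rewrite mH eqxx.
have SS := fun (V : nmodType) (F : 'I_(nv G) -> V) => split_sum F finj fsur fim vv2.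
have mfv : forall j, j != k -> mult G v (f j) = 0%N.
  by move=> j jk; rewrite mv0 // ?(fneq j jk) //; case: (fim j).
have Dk : forall F : 'I_(nv H) -> 'F_2, \sum_j F j = F k + \sum_(j | j != k) F j.
  by move=> F; rewrite (bigD1 k).
pose phi (c : 'rV['F_2]_(nv G)) : 'rV['F_2]_(nv H) := \row_i c 0 (f i).
have G1 : forall c : 'rV['F_2]_(nv G), Gv c v1 =
    \sum_j c 0 (f j) * (mult G v1 (f j))%:R + c 0 v + c 0 v2 * (mult G v1 v2)%:R.
  by move=> c; rewrite /Gv SS [mult G v1 v]sym0 mv1 mulr1.
have G2 : forall c : 'rV['F_2]_(nv G), Gv c v2 =
    \sum_j c 0 (f j) * (mult G v2 (f j))%:R + c 0 v.
  by move=> c; rewrite /Gv SS [mult G v2 v]sym0 mv2 diag0 mulr1 mulr0 addr0.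
have I3 : forall c : 'rV['F_2]_(nv G), Gv c v = c 0 v1 + c 0 v2.
  move=> c; rewrite /Gv SS diag0 mv2 mulr0 addr0 mulr1 Dk fk mv1 mulr1 big1 ?addr0 //.
  by move=> j jk; rewrite mfv // mulr0.
have I1 : forall (c : 'rV['F_2]_(nv G)) i, i != k -> c 0 v2 = c 0 v1 ->
    Gv (phi c) i = Gv c (f i).
  move=> c i ik e.
  have -> : Gv (phi c) i = c 0 v1 * (mult G (f i) v + mult G (f i) v1 + mult G (f i) v2)%:R
      + \sum_(j | j != k) c 0 (f j) * (mult G (f i) (f j))%:R.
    rewrite /Gv Dk mxE fk mHk //; congr (_ + _).
    by apply: eq_bigr => j jk; rewrite mxE mHij.
  rewrite /Gv SS Dk fk [mult G (f i) v]sym0 mfv // e !natrD.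
  apply: (@F2_ring _ _ 0); ring.
have I2 : forall c : 'rV['F_2]_(nv G), c 0 v2 = c 0 v1 ->
    Gv c v1 + Gv c v2 = Gv (phi c) k.
  move=> c e.
  have -> : Gv (phi c) k = \sum_(j | j != k) c 0 (f j) * (mult G v1 (f j))%:R
      + \sum_(j | j != k) c 0 (f j) * (mult G v2 (f j))%:R.
    rewrite /Gv Dk mHkk mulr0 add0r -big_split /=.
    by apply: eq_bigr => j jk; rewrite mxE mkH // mfv // add0n natrD mulrDr.
  rewrite G1 G2 !Dk fk diag0 [mult G v2 v1]sym0 e.
  apply: (@F2_ring _ _ (c 0 v + c 0 v1 * (mult G v1 v2)%:R)); ring.
pose t (d : 'rV['F_2]_(nv H)) :=
  - (\sum_j d 0 j * (mult G v1 (f j))%:R + d 0 k * (mult G v1 v2)%:R).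
pose psi (d : 'rV['F_2]_(nv H)) : 'rV['F_2]_(nv G) :=
  \row_x (if [pick i | f i == x] is Some i then d 0 i
          else if x == v2 then d 0 k else if x == v then t d else 0).
have psif : forall (d : 'rV['F_2]_(nv H)) i, psi d 0 (f i) = d 0 i.
  move=> d i; rewrite mxE; case: pickP => [i' /eqP /finj -> //|/(_ i)].
  by rewrite eqxx.
have psi2 : forall d : 'rV['F_2]_(nv H), psi d 0 v2 = d 0 k.
  move=> d; rewrite mxE; case: pickP => [i /eqP fi|_]; last by rewrite eqxx.
  by case: (fim i); rewrite fi eqxx.
have psiv : forall d : 'rV['F_2]_(nv H), psi d 0 v = t d.
  move=> d; rewrite mxE; case: pickP => [i /eqP fi|_]; last by rewrite (negbTE vv2) eqxx.
  by case: (fim i); rewrite fi eqxx.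
have psi1 : forall d : 'rV['F_2]_(nv H), psi d 0 v1 = d 0 k.
  by move=> d; rewrite -fk psif.
have pp : forall d : 'rV['F_2]_(nv H), phi (psi d) = d.
  by move=> d; apply/rowP => i; rewrite mxE psif.
have chan_e : forall c : 'rV['F_2]_(nv G), chan c -> c 0 v2 = c 0 v1.
  move=> c /forallP Hc; have := Hc v; rewrite I3 F2_add_eq0 => /eqP ->.
  by [].
apply: (@card_maps _ _ _ _ phi psi).
- move=> c Hc; have e := chan_e c Hc; move/forallP: Hc => Hc.
  apply/forallP => i; case: (eqVneq i k) => [->|ik].
    by rewrite -I2 // (eqP (Hc v1)) (eqP (Hc v2)) addr0.
  by rewrite I1 // Hc.
- move=> d /forallP Hd.
  have e : psi d 0 v2 = psi d 0 v1 by rewrite psi2 psi1.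
  have H1 : Gv (psi d) v1 = 0.
    rewrite G1 psi2 psiv /t; under eq_bigr do rewrite psif.
    apply: (@F2_ring _ _ 0); ring.
  apply/forallP => x; case: (cases3 x fsur) => [->|->|[i ->]].
  + by rewrite I3 psi1 psi2 F2_xx.
  + have := I2 _ e; rewrite pp H1 add0r => ->.
    exact: Hd.
  + case: (eqVneq i k) => [->|ik]; first by rewrite fk H1.
    by rewrite -I1 // pp Hd.
- by move=> d _; exact: pp.
- move=> c c' Hc Hc' E.
  have Ef : forall i, c 0 (f i) = c' 0 (f i).
    by move=> i; move/rowP: E => /(_ i); rewrite !mxE.
  have e2 : c 0 v2 = c' 0 v2 by rewrite (chan_e c Hc) (chan_e c' Hc') -fk Ef.
  move/forallP: Hc => Hc; move/forallP: Hc' => Hc'.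
  apply/rowP => x; case: (cases3 x fsur) => [->|->|[i ->]].
  + have := Hc v1; have := Hc' v1; rewrite !G1 e2.
    under eq_bigr do rewrite -Ef.
    move=> /eqP h' /eqP h.
    apply: (addrI (\sum_j c 0 (f j) * (mult G v1 (f j))%:R)).
    apply: (addIr (c' 0 v2 * (mult G v1 v2)%:R)).
    by rewrite h h'.
  + exact: e2.
  + exact: Ef.
Qed.


Lemma moves_inv G H : moves G H -> wf G -> wf H /\ N G = N H.
Proof.
elim=> {G H} [G H mv|G|G K H _ IH1 _ IH2] wG.
- by case: mv => [m|[m|m]]; [exact: VC_inv | exact: ED_inv | exact: FV_inv].
- by [].
- have [wK e1] := IH1 wG; have [wH e2] := IH2 wK.
  by split; [|rewrite e1 e2].
Qed.

Lemma N_deg0 H : all_deg0 H -> N H = (2 ^ nv H)%N.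
Proof.
move=> d0.
have m0 : forall x y, mult H x y = 0%N.
  move=> x y; have := d0 x; rewrite /deg => /eqP; rewrite sum_nat_eq0.
  by move=> /forallP /(_ y) /eqP.
rewrite /N (eq_card (B := predT)) => [|c].
  by rewrite (card_mx _ 1) card_Fp // mul1n.
rewrite !inE; apply/forallP => x; rewrite /Gv big1 // => y _.
by rewrite m0 GRing.mulr0.
Qed.

Local Close Scope ring_scope.

Theorem theorem6p3 (G : mgraph) :
  wf G -> reducible G ->
  forall H : mgraph, moves G H -> all_deg0 H ->
  #|[set x : 'I_(nv H) | deg x == 0]| = \dim (channel_space G).
Proof.
move=> wG _ H mGH d0.
have [_ e] := moves_inv mGH wG.
have -> : [set x : 'I_(nv H) | deg x == 0] = setT.
  by apply/setP => x; rewrite !inE d0 eqxx.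
rewrite cardsT card_ord; apply/eqP.
by rewrite -(@eqn_exp2l 2) // card_chan -/(N G) e N_deg0.
Qed.
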